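(* Let $\mathcal{C}$ be the class of all generalized Petersen graphs $\mathrm{Pet}(n,k)$ ($2<2k\le n$) satisfying at least one of: (a) $k$ is even, $n$ is odd and $n\equiv\pm2\pmod{k-1}$; (b) $n$ and $k$ are both odd and $n\ge 5k$. Then $\mathcal{C}$ is odd-pentagonal.
   Context: For integers $n,k$ with $2<2k\le n$, the generalized Petersen graph $\mathrm{Pet}(n,k)$ has vertex set $\{u_0,\dots,u_{n-1}\}\cup\{v_0,\dots,v_{n-1}\}$ and edge set $\{u_iu_{i+1}\}\cup\{u_iv_i\}\cup\{v_iv_{i+k}\}$, indices modulo $n$. A class $\mathcal{G}$ of simple graphs is odd-girth-closed if for every positive integer $g$ there is a graph in $\mathcal{G}$ whose odd girth (length of a shortest odd cycle) is at least $g$. An odd-girth-closed class $\mathcal{G}$ is odd-pentagonal if there is a positive integer $g^*$ such that every graph in $\mathcal{G}$ with odd girth greater than $g^*$ admits a homomorphism to the 5-cycle $C_5$. *)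

(* Defs.v *)
From mathcomp Require Import all_boot.
Set Implicit Arguments. Unset Strict Implicit. Unset Printing Implicit Defensive.

Record graph := Graph { gV : finType; gE : rel gV }.

Definition has_cycle (G : graph) (l : nat) : Prop :=
  exists s : seq (gV G), [/\ 3 <= l, size s = l, uniq s & cycle (@gE G) s].

Definition odd_girth_ge (G : graph) (g : nat) : Prop :=
  forall l, odd l -> has_cycle G l -> g <= l.

Definition C5_adj : rel 'I_5 :=
  fun a b => (val b == (val a).+1 %% 5) || (val a == (val b).+1 %% 5).

Definition hom_to_C5 (G : graph) : Prop :=
  exists f : gV G -> 'I_5, forall x y, gE x y -> C5_adj (f x) (f y).

Definition graph_class := graph -> Prop.

Definition odd_girth_closed (C : graph_class) : Prop :=
  forall g : nat, g > 0 -> exists G, C G /\ odd_girth_ge G g.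

Definition odd_pentagonal (C : graph_class) : Prop :=
  odd_girth_closed C /\
  exists gs : nat, 0 < gs /\
    forall G, C G -> odd_girth_ge G gs.+1 -> hom_to_C5 G.

(* Generalized Petersen graph Pet(n,k): vertices (false, i) = u_i and
   (true, i) = v_i, i in 'I_n; edges u_i u_{i+1}, u_i v_i, v_i v_{i+k}. *)
Definition pet_adj (n k : nat) : rel (bool * 'I_n) :=
  fun x y =>
    match x, y with
    | (false, i), (false, j) =>
        (val j == (val i).+1 %% n) || (val i == (val j).+1 %% n)
    | (false, i), (true, j) | (true, i), (false, j) => val i == val j
    | (true, i), (true, j) =>
        (val j == (val i + k) %% n) || (val i == (val j + k) %% n)
    end.

Definition Pet (n k : nat) : graph := Graph (@pet_adj n k).

Definition classC : graph_class :=
  fun G => exists n k : nat,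
    [/\ 2 < 2 * k, 2 * k <= n,
        (~~ odd k && odd n &&
           ((n %% (k - 1) == 2 %% (k - 1)) || ((n + 2) %% (k - 1) == 0)))
        || (odd n && odd k && (5 * k <= n))
      & G = Pet n k].

(* Main.v *)
Require Import Defs.
From mathcomp Require Import all_boot zify.
Set Implicit Arguments. Unset Strict Implicit. Unset Printing Implicit Defensive.

Definition adjm (L a b : nat) := (b == a.+1 %[mod L]) || (a == b.+1 %[mod L]).

Lemma adjmC L a b : adjm L a b = adjm L b a.
Proof. by rewrite /adjm orbC. Qed.

Lemma modS_congr L a a' : a = a' %[mod L] -> a.+1 = a'.+1 %[mod L].
Proof. by move=> H; rewrite -[a.+1]addn1 -[a'.+1]addn1 -modnDml H modnDml. Qed.

Lemma adjm_congr L a a' b b' : a = a' %[mod L] -> b = b' %[mod L] ->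
  adjm L a b -> adjm L a' b'.
Proof.
move=> Ha Hb; rewrite /adjm -Hb -(modS_congr Ha) -Ha -(modS_congr Hb).
done.
Qed.

Lemma adjm_S L a b : adjm L a b -> adjm L a.+1 b.+1.
Proof.
have E x y : (x.+1 == y.+1 %[mod L]) = (x == y %[mod L]).
  by rewrite -(addn1 x) -(addn1 y) eqn_modDr.
by rewrite /adjm !E.
Qed.

Lemma eqmod_mul a b t L : a = b + t * L -> a = b %[mod L].
Proof. by move=> ->; rewrite addnC modnMDl. Qed.

Lemma divn_diff n a b : 0 < n -> a <= b ->
  exists d, [/\ b %/ n = a %/ n + d, b - a < n * d + n & n * d < b - a + n].
Proof.
move=> Hn Hab.
have Hq := leq_div2r n Hab.
have Ea := divn_eq a n; have Eb := divn_eq b n.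
have Ra := ltn_pmod a Hn; have Rb := ltn_pmod b Hn.
move: Hq Ea Eb Ra Rb.
move: (a %/ n) (b %/ n) (a %% n) (b %% n) => qa qb ra rb Hq Ea Eb Ra Rb.
have [d Hd] : exists d, qb = qa + d by exists (qb - qa); lia.
subst qb a b.
exists d; split; first by [].
- rewrite mulnDl. Time lia.
- rewrite mulnDl; lia.
Qed.

Definition Gf (n L' M x : nat) := x + 2 * L' * (x * M %/ n).

Lemma fl_add n M x y : 0 < n -> exists d,
  [/\ (x + y) * M %/ n = x * M %/ n + d, y * M < n * d + n & n * d < y * M + n].
Proof.
move=> Hn.
have [|d [H1 H2 H3]] := @divn_diff n (x * M) ((x + y) * M) Hn.
  by rewrite mulnDl leq_addr.
by exists d; rewrite mulnDl addKn in H2 H3.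
Qed.

Lemma inner_step n k L' c e M x : 0 < n -> L'.+1 %| c -> k = 2 * e + c + 1 ->
  n * e <= k * M -> k * M <= n * (e + 1) ->
  adjm L'.+1 (Gf n L' M x) (Gf n L' M (x + k)).
Proof.
move=> Hn Hc Hk Hlo Hhi.
have [d [Hfl H2 H3]] := @fl_add n M x k Hn.
have Hed : e <= d.
  have : n * e < n * d.+1 by rewrite mulnS; lia.
  by rewrite ltn_pmul2l // ltnS.
have Hde : d <= e + 1.
  have : n * d < n * (e + 2) by rewrite [e + 2]addnS mulnS; lia.
  by rewrite ltn_pmul2l // addnS ltnS.
have [c' Ec] : exists c', c = c' * L'.+1 by exists (c %/ L'.+1); rewrite divnK.
rewrite /adjm /Gf Hfl.
have [->|Hd] : d = e \/ d = e + 1 by lia.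
- apply/orP; left; apply/eqP; apply: (@eqmod_mul _ _ (2 * e + c')).
  rewrite Hk Ec; move: (x * M %/ n) => f; lia.
- apply/orP; right; rewrite eq_sym; apply/eqP; apply: (@eqmod_mul _ _ (2 * (e + 1) + c')).
  rewrite Hd Hk Ec; move: (x * M %/ n) => f; lia.
Qed.

Lemma outer_step n L' M x : 0 < n -> M <= n ->
  adjm L'.+1 (Gf n L' M x) (Gf n L' M x.+1).
Proof.
move=> Hn HM.
have [d [Hfl H2 H3]] := @fl_add n M x 1 Hn.
have Hd : d < 2 by rewrite -(ltn_pmul2l Hn); lia.
rewrite /adjm /Gf -(addn1 x) Hfl.
have [->|->] : d = 0 \/ d = 1 by lia.
- apply/orP; left; apply/eqP; apply: (@eqmod_mul _ _ 0).
  move: (x * M %/ n) => f; lia.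
- apply/orP; right; rewrite eq_sym; apply/eqP; apply: (@eqmod_mul _ _ 2).
  move: (x * M %/ n) => f; lia.
Qed.

Lemma outer_wrap n L' M T : 0 < n -> L'.+1 %| T -> n = T + 2 * M ->
  adjm L'.+1 (Gf n L' M n.-1) (Gf n L' M 0).
Proof.
move=> Hn HT En.
have [t Et] : exists t, T = t * L'.+1 by exists (T %/ L'.+1); rewrite divnK.
rewrite /adjm /Gf mul0n div0n muln0 add0n.
case: M En => [|M'] En.
- rewrite muln0 div0n muln0 addn0.
  apply/orP; left; rewrite eq_sym; apply/eqP; apply: (@eqmod_mul _ _ t).
  lia.
- have -> : n.-1 * M'.+1 %/ n = M'.
    have -> : n.-1 * M'.+1 = M' * n + (n - M'.+1).
      have -> : n.-1 = T + 2 * M' + 1 by lia.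
      rewrite En; lia.
    by rewrite divnMDl // divn_small ?addn0 //; lia.
  apply/orP; right; apply/eqP; apply: (@eqmod_mul _ _ (t + 2 * M')).
  rewrite En Et; lia.
Qed.

Lemma inner_wrap n L' M T y : 0 < n -> L'.+1 %| T -> n = T + 2 * M ->
  Gf n L' M (y + n) = Gf n L' M y %[mod L'.+1].
Proof.
move=> Hn HT En.
have [t Et] : exists t, T = t * L'.+1 by exists (T %/ L'.+1); rewrite divnK.
rewrite /Gf.
have -> : (y + n) * M = M * n + y * M by rewrite mulnDl addnC mulnC.
rewrite divnMDl //.
apply: (@eqmod_mul _ _ (t + 2 * M)).
move: (y * M %/ n) => f; lia.
Qed.

Definition Fp n L' M (x : bool * 'I_n) : nat := Gf n L' M (val x.2) + x.1.

Lemma pet_hom_gen n k L' c e M T : 0 < n -> k < n -> L'.+1 %| c -> L'.+1 %| T ->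
  n = T + 2 * M -> k = 2 * e + c + 1 -> n * e <= k * M -> k * M <= n * (e + 1) ->
  forall x y, @pet_adj n k x y -> adjm L'.+1 (Fp L' M x) (Fp L' M y).
Proof.
move=> Hn Hkn Hc HT En Hk Hlo Hhi.
have inner : forall i j : 'I_n, val j = (val i + k) %% n ->
    adjm L'.+1 (Gf n L' M i).+1 (Gf n L' M j).+1.
  move=> i j Hj; apply: adjm_S.
  case: (ltnP (val i + k) n) => H.
    rewrite modn_small in Hj => //; rewrite Hj; exact: inner_step Hn Hc Hk Hlo Hhi.
  have Ej : val i + k = val j + n.
    rewrite Hj -[val i + k](subnK H) modnDr modn_small ?subnK //.
    have Hi : val i < n := ltn_ord i; lia.
  apply: adjm_congr (inner_step i Hn Hc Hk Hlo Hhi) => //.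
  rewrite Ej; exact: inner_wrap Hn HT En.
have outer : forall i j : 'I_n, val j = (val i).+1 %% n ->
    adjm L'.+1 (Gf n L' M i) (Gf n L' M j).
  move=> i j Hj.
  case: (ltnP (val i).+1 n) => H.
    rewrite modn_small in Hj => //; rewrite Hj; apply: outer_step Hn _; lia.
  have Ei : val i = n.-1 by have Hi : val i < n := ltn_ord i; lia.
  have Ej0 : val j = 0 by rewrite Hj Ei prednK // modnn.
  rewrite Ei Ej0; exact: outer_wrap Hn HT En.
case=> [[|] i] [[|] j] /=; rewrite /Fp /= ?addn0 ?addn1.
- case/orP=> /eqP H.
    exact: inner.
  by rewrite adjmC; apply: inner.
- move/eqP=> H; have -> : i = j by apply: val_inj.
  by rewrite adjmC /adjm eqxx.
- move/eqP=> H; have -> : i = j by apply: val_inj.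
  by rewrite /adjm eqxx.
- case/orP=> /eqP H.
    exact: outer.
  by rewrite adjmC; apply: outer.
Qed.

Lemma walk_count (V : finType) (e : rel V) (F : V -> nat) L :
  (forall x y, e x y -> adjm L (F x) (F y)) ->
  forall p x, path e x p ->
  exists P Q, P + Q = size p /\ F (last x p) + Q = F x + P %[mod L].
Proof.
move=> Hom; elim=> [|y p IH] x /=.
  by move=> _; exists 0, 0.
case/andP=> Exy /IH [P' [Q' [HPQ HM]]].
case/orP: (Hom _ _ Exy) => /eqP H.
- exists P'.+1, Q'; split; first by lia.
  rewrite HM -(modnDml (F y)) H modnDml; congr (_ %% _); lia.
- exists P', Q'.+1; split; first by lia.
  rewrite addnS -addn1 -(modnDml (F (last y p) + Q')) HM modnDml.
  rewrite -(modnDml (F x)) H modnDml; congr (_ %% _); lia.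
Qed.

Lemma hom_odd (G : graph) (F : gV G -> nat) L :
  (forall x y, @gE G x y -> adjm L (F x) (F y)) ->
  forall l, odd l -> has_cycle G l -> L <= l.
Proof.
move=> Hom l Hl [s [H3 Hs _ Hc]].
case: s Hs Hc => [|x p] Hs Hc; first by rewrite -Hs in H3.
rewrite /cycle in Hc.
have [P [Q [HPQ HM]]] := walk_count Hom Hc.
rewrite last_rcons size_rcons in HPQ HM.
move/eqP: HM; rewrite eqn_modDl => HM.
have HPQl : P + Q = l by rewrite HPQ -Hs.
case: (ltngtP P Q) => H.
- rewrite eqn_mod_dvd ?(ltnW H) // in HM.
  have := dvdn_leq _ HM; rewrite subn_gt0 => /(_ H); lia.
- rewrite eq_sym eqn_mod_dvd ?(ltnW H) // in HM.
  have := dvdn_leq _ HM; rewrite subn_gt0 => /(_ H); lia.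
- by move: Hl; rewrite -HPQl H addnn odd_double.
Qed.

Lemma to_C5 (G : graph) (F : gV G -> nat) :
  (forall x y, @gE G x y -> adjm 5 (F x) (F y)) -> hom_to_C5 G.
Proof.
move=> Hom; exists (fun x => Ordinal (ltn_pmod (F x) (isT : 0 < 5))).
move=> x y /Hom; rewrite /C5_adj /adjm /=.
have E a : (a %% 5).+1 %% 5 = a.+1 %% 5.
  by rewrite -[(a %% 5).+1]addn1 modnDml addn1.
by rewrite !E.
Qed.

Lemma pet_cycle n k : 0 < k -> k < n -> has_cycle (Pet n k) (k + 3).
Proof.
case: n => [|n'] Hk Hkn; first by [].
pose h j : bool * 'I_n'.+1 := (false, inord (k - j)).
have vi m : m <= k -> val (inord m : 'I_n'.+1) = m.
  by move=> Hm; apply: inordK; lia.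
exists [:: (true, inord 0), (true, inord k) & map h (iota 0 k.+1)].
split.
- lia.
- by rewrite /= size_map size_iota; lia.
- rewrite cons_uniq in_cons negb_or cons_uniq.
  apply/andP; split; [apply/andP; split|apply/andP; split].
  + rewrite xpair_eqE /= -val_eqE /= !vi //; lia.
  + by apply/mapP => -[j _].
  + by apply/mapP => -[j _].
  + rewrite map_inj_in_uniq ?iota_uniq // => j1 j2.
    rewrite !mem_iota !add0n => Hj1 Hj2 /(congr1 (fun z => val z.2)) /=.
    rewrite !vi; lia.
- have Hp : forall m j, j + m <= k -> path (@pet_adj n'.+1 k) (h j) (map h (iota j.+1 m)).
    elim=> [|m IH] j Hjm //=.
    rewrite IH; last by lia.
    rewrite andbT /pet_adj /= !vi; try lia.
    apply/orP; right; rewrite modn_small; lia.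
  have [k' Ek] : exists k', k = k'.+1 by exists k.-1; lia.
  rewrite /cycle /= rcons_path.
  apply/and4P; split.
  + by rewrite /pet_adj /= !vi // add0n (modn_small Hkn) eqxx.
  + by rewrite /pet_adj /= !vi ?subn0 //.
  + exact: Hp.
  + rewrite last_map.
    have -> : last 0 (iota 1 k) = k.
      by rewrite Ek -[k'.+1]addn1 iotaD last_cat /=; lia.
    by rewrite /pet_adj /= !vi ?subnn //.
Qed.

Lemma half_odd x : odd x -> exists h, x = 2 * h + 1.
Proof. move=> Hx; exists x./2; have := odd_double_half x; rewrite Hx -muln2; lia. Qed.

Lemma half_even x : ~~ odd x -> exists h, x = 2 * h.
Proof. move=> Hx; exists x./2; have := odd_double_half x; rewrite (negbTE Hx) -muln2; lia. Qed.

Theorem corollary7 : odd_pentagonal classC.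
Proof.
split.
- move=> g _.
  exists (Pet (3 * (2 * g + 5)) 3); split.
  + exists (3 * (2 * g + 5)), 3; split => //; first by timeout 20 lia.
    apply/orP; right.
    rewrite oddM oddD oddM /=; timeout 20 lia.
  + move=> l Hl Hc.
    have Hom := @pet_hom_gen (3 * (2 * g + 5)) 3 (2 * g + 4) 0 1 (2 * g + 5) (2 * g + 5).
    have E5 : (2 * g + 4).+1 = 2 * g + 5 by timeout 20 lia.
    rewrite E5 in Hom.
    have Hl' : 2 * g + 5 <= l.
      apply: (@hom_odd (Pet (3 * (2 * g + 5)) 3) (Fp (2 * g + 4) (2 * g + 5))) Hl Hc.
      apply: Hom; try lia; rewrite ?dvdn0 ?dvdnn //.
    lia.
- exists 13; split => //.
  move=> G [n [k [H1 H2 Hc ->]]] Hog.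
  case/orP: Hc.
  + case/andP => /andP [Hke Hn] Hmod.
    have Hk11 : 11 <= k.
      case: (ltnP k 11) => Hk //.
      have := Hog (k + 3); rewrite oddD (negbTE Hke) /= => /(_ isT).
      move=> /(_ (pet_cycle _ _)); timeout 20 lia.
    have [e Ek] : exists e, k = 2 * e + 6.
      have [h Eh] := half_even Hke; exists (h - 3).
      have : k != 11 by apply/eqP => E; rewrite E in Hke.
      lia.
    have Hm1 : k - 1 = 2 * e + 5 by timeout 20 lia.
    rewrite Hm1 in Hmod.
    case/orP: Hmod => /eqP Hm.
    * have En : n = n %/ (2 * e + 5) * (2 * e + 5) + 2.
        by rewrite {1}(divn_eq n (2 * e + 5)) Hm modn_small //; timeout 20 lia.
      move: (n %/ (2 * e + 5)) En => q En.
      apply: (@to_C5 (Pet n k) (Fp 4 (q * e + 1))).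
      apply: (@pet_hom_gen n k 4 5 e (q * e + 1) (5 * q)); timeout 20 lia.
    * have En : n + 2 = (n + 2) %/ (2 * e + 5) * (2 * e + 5).
        by rewrite {1}(divn_eq (n + 2) (2 * e + 5)) Hm addn0.
      move: ((n + 2) %/ (2 * e + 5)) En => q En.
      have Hq : 3 <= q by clear -En H2 Ek; timeout 20 nia.
      have Hqe : 9 <= q * e by clear -Hq Ek Hk11; timeout 20 nia.
      apply: (@to_C5 (Pet n k) (Fp 4 (q * e - 1))).
      have En' : n = q * (2 * e + 5) - 2 by timeout 20 lia.
      apply: (@pet_hom_gen n k 4 5 e (q * e - 1) (5 * q)).
      - timeout 20 lia.
      - timeout 20 lia.
      - exact: dvdnn.
      - exact: dvdn_mulr.
      - rewrite En'; timeout 20 lia.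
      - timeout 20 lia.
      - rewrite En' Ek; timeout 20 lia.
      - rewrite En' Ek; timeout 20 lia.
  + case/andP => /andP [Hn Hk] H5k.
    have [e Ek] := half_odd Hk.
    have [M' EM] := half_odd Hn.
    apply: (@to_C5 (Pet n k) (Fp 4 (M' - 2))).
    apply: (@pet_hom_gen n k 4 0 e (M' - 2) 5).
    - timeout 20 lia.
    - timeout 20 lia.
    - exact: dvdn0.
    - exact: dvdnn.
    - timeout 20 lia.
    - timeout 20 lia.
    - rewrite EM Ek; timeout 20 lia.
    - rewrite EM Ek; timeout 20 lia.
Qed.
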